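(* The map $\zeta\mapsto z(\zeta)=h_E(\zeta)+ih_N(\zeta)-h_W(\zeta)-ih_S(\zeta)$ is an orientation-preserving diffeomorphism from the unit disc $\mathbb D$ onto $\diamondsuit=\{x+iy:|x|+|y|<1\}$.
   Context: $\gamma_E=(e^{-i\pi/4},e^{i\pi/4})$, $\gamma_N=(e^{i\pi/4},e^{3i\pi/4})$, $\gamma_W=(e^{3i\pi/4},e^{5i\pi/4})$, $\gamma_S=(e^{5i\pi/4},e^{7i\pi/4})$ are the four counterclockwise boundary arcs of the unit disc $\mathbb D$, and $h_E,h_N,h_W,h_S$ are their harmonic measures in $\mathbb D$: for $\alpha<\beta<\alpha+2\pi$, $\mathrm{hm}_{\mathbb D}(\zeta;(e^{i\alpha},e^{i\beta}))=\tfrac1\pi\big(\arg(e^{i\beta}-\zeta)-\arg(e^{i\alpha}-\zeta)\big)-\tfrac1{2\pi}(\beta-\alpha)$. *)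

(* Defs.v *)
(* classical reals; points of C are represented as R*R. *)
From Stdlib Require Import Reals.
Open Scope R_scope.

Definition pt := (R * R)%type.

Definition cis (t : R) : pt := (cos t, sin t).
Definition psub (u v : pt) : pt := (fst u - fst v, snd u - snd v).
Definition pnorm (u : pt) : R := sqrt (fst u * fst u + snd u * snd u).

(* Argument of a nonzero point, normalised to [0, 2*PI). *)
Definition parg (u : pt) : R :=
  let c := acos (fst u / pnorm u) in
  if Rle_dec 0 (snd u) then c else 2 * PI - c.

Definition ccw_angle (u v : pt) : R :=
  let d := parg v - parg u in
  if Rlt_dec d 0 then d + 2 * PI else d.

(* Harmonic measure in D of the arc (e^{i a}, e^{i b}), a < b < a + 2 PI:
   (1/PI)(arg(e^{ib}-z) - arg(e^{ia}-z)) - (b-a)/(2 PI). *)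
Definition hm (a b : R) (z : pt) : R :=
  / PI * ccw_angle (psub (cis a) z) (psub (cis b) z) - (b - a) / (2 * PI).

Definition hE := hm (- PI / 4) (PI / 4).
Definition hN := hm (PI / 4) (3 * PI / 4).
Definition hW := hm (3 * PI / 4) (5 * PI / 4).
Definition hS := hm (5 * PI / 4) (7 * PI / 4).

Definition zmap (p : pt) : pt := (hE p - hW p, hN p - hS p).

Definition in_disc (p : pt) : Prop := fst p * fst p + snd p * snd p < 1.
Definition in_diamond (p : pt) : Prop := Rabs (fst p) + Rabs (snd p) < 1.

Definition has_pdx (f : pt -> R) (p : pt) (l : R) : Prop :=
  derivable_pt_lim (fun t => f (t, snd p)) (fst p) l.
Definition has_pdy (f : pt -> R) (p : pt) (l : R) : Prop :=
  derivable_pt_lim (fun t => f (fst p, t)) (snd p) l.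

Definition cont_on (U : pt -> Prop) (f : pt -> R) : Prop :=
  forall p, U p -> forall eps, eps > 0 -> exists del, del > 0 /\
    forall q, U q -> pnorm (psub q p) < del -> Rabs (f q - f p) < eps.

Fixpoint Ck (k : nat) (U : pt -> Prop) (f : pt -> R) : Prop :=
  match k with
  | O => cont_on U f
  | S k' => cont_on U f /\ exists gx gy : pt -> R,
      (forall p, U p -> has_pdx f p (gx p) /\ has_pdy f p (gy p)) /\
      Ck k' U gx /\ Ck k' U gy
  end.

Definition smooth_on (U : pt -> Prop) (f : pt -> R) : Prop := forall k, Ck k U f.

Definition smooth_map_on (U : pt -> Prop) (F : pt -> pt) : Prop :=
  smooth_on U (fun p => fst (F p)) /\ smooth_on U (fun p => snd (F p)).

Definition diffeo_onto (U V : pt -> Prop) (F : pt -> pt) : Prop :=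
  (forall p, U p -> V (F p)) /\
  exists G : pt -> pt,
    (forall q, V q -> U (G q)) /\
    (forall p, U p -> G (F p) = p) /\
    (forall q, V q -> F (G q) = q) /\
    smooth_map_on U F /\ smooth_map_on V G.

Definition orientation_preserving_on (U : pt -> Prop) (F : pt -> pt) : Prop :=
  forall p, U p -> exists a b c d : R,
    has_pdx (fun q => fst (F q)) p a /\ has_pdy (fun q => fst (F q)) p b /\
    has_pdx (fun q => snd (F q)) p c /\ has_pdy (fun q => snd (F q)) p d /\
    a * d - b * c > 0.

(* Main.v *)
Require Import Defs.
From Stdlib Require Import Reals Lra Psatz FunctionalExtensionality.
Open Scope R_scope.


Lemma cont_pt_eps (phi : R -> R) y : continuity_pt phi y ->
  forall eps, eps > 0 -> exists d, d > 0 /\ forall y', Rabs (y' - y) < d -> Rabs (phi y' - phi y) < eps.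
Proof.
  intros H eps He; destruct (H eps He) as [d [Hd Hx]]; exists d; split; auto.
  intros y' Hy'. destruct (Req_dec y' y) as [->|Hne].
  - rewrite Rminus_diag, Rabs_R0; lra.
  - apply (Hx y'); split; [split; [exact I| auto] | exact Hy'].
Qed.

Lemma abs_fst_le (u : pt) : Rabs (fst u) <= pnorm u.
Proof.
  unfold pnorm. rewrite <- sqrt_Rsqr_abs. apply sqrt_le_1_alt. unfold Rsqr. nra.
Qed.
Lemma abs_snd_le (u : pt) : Rabs (snd u) <= pnorm u.
Proof.
  unfold pnorm. rewrite <- sqrt_Rsqr_abs. apply sqrt_le_1_alt. unfold Rsqr. nra.
Qed.

Section Fw.
Variable U : pt -> Prop.

Lemma cont_const c : cont_on U (fun _ => c).
Proof. intros p _ eps He; exists 1; split; [lra|]; intros; rewrite Rminus_diag, Rabs_R0; lra. Qed.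

Lemma cont_fst : cont_on U (fun p => fst p).
Proof. intros p _ eps He; exists eps; split; [lra|]; intros q _ Hq.
  pose proof (abs_fst_le (psub q p)); simpl in *; lra. Qed.
Lemma cont_snd : cont_on U (fun p => snd p).
Proof. intros p _ eps He; exists eps; split; [lra|]; intros q _ Hq.
  pose proof (abs_snd_le (psub q p)); simpl in *; lra. Qed.

Lemma cont_plus f g : cont_on U f -> cont_on U g -> cont_on U (fun p => f p + g p).
Proof.
  intros Hf Hg p Hp eps He.
  destruct (Hf p Hp (eps/2)) as [d1 [Hd1 H1]]; [lra|].
  destruct (Hg p Hp (eps/2)) as [d2 [Hd2 H2]]; [lra|].
  exists (Rmin d1 d2); split; [apply Rmin_pos; auto|].
  intros q Hq Hqp. pose proof (Rmin_l d1 d2); pose proof (Rmin_r d1 d2).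
  specialize (H1 q Hq ltac:(lra)); specialize (H2 q Hq ltac:(lra)).
  replace (f q + g q - (f p + g p)) with ((f q - f p) + (g q - g p)) by ring.
  pose proof (Rabs_triang (f q - f p) (g q - g p)); lra.
Qed.

Lemma cont_mult f g : cont_on U f -> cont_on U g -> cont_on U (fun p => f p * g p).
Proof.
  intros Hf Hg p Hp eps He.
  remember (Rabs (f p)) as A eqn:EA; remember (Rabs (g p)) as B eqn:EB.
  assert (HA : 0 <= A) by (subst; apply Rabs_pos). assert (HB : 0 <= B) by (subst; apply Rabs_pos).
  destruct (Hf p Hp (eps/(2*(B+1)))) as [d1 [Hd1 H1]].
  { apply Rlt_gt, Rdiv_lt_0_compat; lra. }
  destruct (Hg p Hp (Rmin 1 (eps/(2*(A+1))))) as [d2 [Hd2 H2]].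
  { apply Rmin_pos; [lra|]. apply Rdiv_lt_0_compat; lra. }
  exists (Rmin d1 d2); split; [apply Rmin_pos; auto|].
  intros q Hq Hqp. pose proof (Rmin_l d1 d2); pose proof (Rmin_r d1 d2).
  specialize (H1 q Hq ltac:(lra)); specialize (H2 q Hq ltac:(lra)).
  pose proof (Rmin_l 1 (eps/(2*(A+1)))); pose proof (Rmin_r 1 (eps/(2*(A+1)))).
  set (X := f q - f p) in *. set (Y := g q - g p) in *.
  replace (f q * g q - f p * g p) with (X * g q + f p * Y) by (unfold X, Y; ring).
  assert (Hgq : Rabs (g q) <= B + 1).
  { replace (g q) with (g p + Y) by (unfold Y; ring).
    pose proof (Rabs_triang (g p) Y); rewrite <- EB in *; lra. }
  pose proof (Rabs_triang (X * g q) (f p * Y)).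
  rewrite !Rabs_mult, <- EA in H5.
  assert (E1 : Rabs X * Rabs (g q) < eps / 2).
  { assert (Rabs X * Rabs (g q) <= Rabs X * (B+1)) by (apply Rmult_le_compat_l; [apply Rabs_pos|lra]).
    assert (Rabs X * (B+1) < eps/(2*(B+1)) * (B+1)) by (apply Rmult_lt_compat_r; lra).
    replace (eps / (2 * (B + 1)) * (B + 1)) with (eps/2) in H7 by (field; lra). lra. }
  assert (E2 : A * Rabs Y < eps / 2).
  { assert (A * Rabs Y <= A * (eps/(2*(A+1)))) by (apply Rmult_le_compat_l; lra).
    assert (A * (eps/(2*(A+1))) < eps/2).
    { replace (A * (eps/(2*(A+1)))) with (eps/2 * (A/(A+1))) by (field; lra).
      assert (A/(A+1) < 1) by (apply (Rmult_lt_reg_r (A+1)); [lra|]; field_simplify; lra).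
      nra. }
    lra. }
  lra.
Qed.

Lemma cont_comp (phi : R -> R) f : (forall p, U p -> continuity_pt phi (f p)) ->
  cont_on U f -> cont_on U (fun p => phi (f p)).
Proof.
  intros Hphi Hf p Hp eps He.
  destruct (cont_pt_eps _ _ (Hphi p Hp) eps He) as [d [Hd H]].
  destruct (Hf p Hp d Hd) as [d1 [Hd1 H1]].
  exists d1; split; auto.
Qed.
End Fw.

Lemma pdx_const c p : has_pdx (fun _ => c) p 0.
Proof. unfold has_pdx. apply (derivable_pt_lim_const c). Qed.
Lemma pdy_const c p : has_pdy (fun _ => c) p 0.
Proof. unfold has_pdy. apply (derivable_pt_lim_const c). Qed.
Lemma pdx_fst p : has_pdx (fun q => fst q) p 1.
Proof. unfold has_pdx. apply derivable_pt_lim_id. Qed.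
Lemma pdy_fst p : has_pdy (fun q => fst q) p 0.
Proof. unfold has_pdy. apply (derivable_pt_lim_const (fst p)). Qed.
Lemma pdx_snd p : has_pdx (fun q => snd q) p 0.
Proof. unfold has_pdx. apply (derivable_pt_lim_const (snd p)). Qed.
Lemma pdy_snd p : has_pdy (fun q => snd q) p 1.
Proof. unfold has_pdy. apply derivable_pt_lim_id. Qed.

Lemma pdx_plus f g p l1 l2 : has_pdx f p l1 -> has_pdx g p l2 ->
  has_pdx (fun q => f q + g q) p (l1 + l2).
Proof. unfold has_pdx; intros; apply (derivable_pt_lim_plus (fun t => f (t, snd p)) (fun t => g (t, snd p))); auto. Qed.
Lemma pdy_plus f g p l1 l2 : has_pdy f p l1 -> has_pdy g p l2 ->
  has_pdy (fun q => f q + g q) p (l1 + l2).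
Proof. unfold has_pdy; intros; apply (derivable_pt_lim_plus (fun t => f (fst p, t)) (fun t => g (fst p, t))); auto. Qed.
Lemma pdx_mult f g p l1 l2 : has_pdx f p l1 -> has_pdx g p l2 ->
  has_pdx (fun q => f q * g q) p (l1 * g p + f p * l2).
Proof. destruct p as [x y]; unfold has_pdx; simpl; intros;
  apply (derivable_pt_lim_mult (fun t => f (t, y)) (fun t => g (t, y))); auto. Qed.
Lemma pdy_mult f g p l1 l2 : has_pdy f p l1 -> has_pdy g p l2 ->
  has_pdy (fun q => f q * g q) p (l1 * g p + f p * l2).
Proof. destruct p as [x y]; unfold has_pdy; simpl; intros;
  apply (derivable_pt_lim_mult (fun t => f (x, t)) (fun t => g (x, t))); auto. Qed.
Lemma pdx_comp (phi : R -> R) f p l1 l2 : has_pdx f p l1 -> derivable_pt_lim phi (f p) l2 ->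
  has_pdx (fun q => phi (f q)) p (l2 * l1).
Proof. destruct p as [x y]; unfold has_pdx; simpl; intros;
  apply (derivable_pt_lim_comp (fun t => f (t, y)) phi); auto. Qed.
Lemma pdy_comp (phi : R -> R) f p l1 l2 : has_pdy f p l1 -> derivable_pt_lim phi (f p) l2 ->
  has_pdy (fun q => phi (f q)) p (l2 * l1).
Proof. destruct p as [x y]; unfold has_pdy; simpl; intros;
  apply (derivable_pt_lim_comp (fun t => f (x, t)) phi); auto. Qed.
Lemma pdx_eq f p l l' : has_pdx f p l -> l = l' -> has_pdx f p l'.
Proof. intros H ->; exact H. Qed.
Lemma pdy_eq f p l l' : has_pdy f p l -> l = l' -> has_pdy f p l'.
Proof. intros H ->; exact H. Qed.

Lemma dinv y : y <> 0 -> derivable_pt_lim Rinv y (- (/ y * / y)).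
Proof.
  intros Hy. assert (H := derivable_pt_lim_div (fct_cte 1) id y 0 1
    (derivable_pt_lim_const 1 y) (derivable_pt_lim_id y) Hy).
  unfold fct_cte, id in H. replace (- (/ y * / y)) with ((0 * y - 1 * 1) / y²)
    by (unfold Rsqr; field; auto).
  apply (derivable_pt_lim_ext (fun x => 1 / x)); [intro; unfold Rdiv; ring|]. exact H.
Qed.
Lemma dtan y : - (PI/2) < y < PI/2 -> derivable_pt_lim tan y (1 + tan y * tan y).
Proof.
  intros Hy. assert (Hc : 0 < cos y) by (apply cos_gt_0; lra).
  assert (H := derivable_pt_lim_div sin cos y _ _ (derivable_pt_lim_sin y) (derivable_pt_lim_cos y) ltac:(lra)).
  replace (1 + tan y * tan y) with ((cos y * cos y - - sin y * sin y) / (cos y)²).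
  - exact H.
  - unfold tan, Rsqr. field. lra.
Qed.
Lemma datan y : derivable_pt_lim atan y (/ (1 + y * y)).
Proof. replace (y * y) with (y ^ 2) by ring. apply derivable_pt_lim_atan. Qed.
Lemma dsqrt y : 0 < y -> derivable_pt_lim sqrt y (/ (2 * sqrt y)).
Proof. apply derivable_pt_lim_sqrt. Qed.

Lemma dcont phi y l : derivable_pt_lim phi y l -> continuity_pt phi y.
Proof. intros H. apply derivable_continuous_pt. exists l. exact H. Qed.

Section Fw2.
Variable U : pt -> Prop.

Lemma Ck_cont k f : Ck k U f -> cont_on U f.
Proof. destruct k; simpl; tauto. Qed.

Lemma Ck_weaken k f : Ck (S k) U f -> Ck k U f.
Proof.
  revert f; induction k; intros f H.
  - exact (proj1 H).
  - destruct H as [Hc [gx [gy [Hd [Hx Hy]]]]].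
    split; [exact Hc|]. exists gx, gy; split; [exact Hd|]; split; auto.
Qed.

Lemma Ck_funext k f g : (forall p, f p = g p) -> Ck k U f -> Ck k U g.
Proof. intros H; replace g with f; [auto| apply functional_extensionality; auto]. Qed.

Lemma Ck_const k c : Ck k U (fun _ => c).
Proof.
  revert c; induction k; intro c; simpl. apply cont_const.
  split; [apply cont_const|]. exists (fun _ => 0), (fun _ => 0).
  split; [intros; split; [apply pdx_const|apply pdy_const]|]. split; apply IHk.
Qed.

Lemma Ck_fst k : Ck k U (fun p => fst p).
Proof.
  destruct k; simpl. apply cont_fst.
  split; [apply cont_fst|]. exists (fun _ => 1), (fun _ => 0).
  split; [intros; split; [apply pdx_fst|apply pdy_fst]|]. split; apply Ck_const.
Qed.
Lemma Ck_snd k : Ck k U (fun p => snd p).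
Proof.
  destruct k; simpl. apply cont_snd.
  split; [apply cont_snd|]. exists (fun _ => 0), (fun _ => 1).
  split; [intros; split; [apply pdx_snd|apply pdy_snd]|]. split; apply Ck_const.
Qed.

Lemma Ck_plus k f g : Ck k U f -> Ck k U g -> Ck k U (fun p => f p + g p).
Proof.
  revert f g; induction k; intros f g Hf Hg.
  - apply cont_plus; auto.
  - destruct Hf as [Hfc [fx [fy [Hfd [Hfx Hfy]]]]].
    destruct Hg as [Hgc [gx [gy [Hgd [Hgx Hgy]]]]].
    split; [apply cont_plus; auto|].
    exists (fun p => fx p + gx p), (fun p => fy p + gy p).
    split; [intros p Hp; destruct (Hfd p Hp), (Hgd p Hp); split; [apply pdx_plus|apply pdy_plus]; auto|].
    split; apply IHk; auto.
Qed.

Lemma Ck_mult k f g : Ck k U f -> Ck k U g -> Ck k U (fun p => f p * g p).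
Proof.
  revert f g; induction k; intros f g Hf Hg.
  - apply cont_mult; auto.
  - pose proof (Ck_weaken _ _ Hf) as Hf'. pose proof (Ck_weaken _ _ Hg) as Hg'.
    destruct Hf as [Hfc [fx [fy [Hfd [Hfx Hfy]]]]].
    destruct Hg as [Hgc [gx [gy [Hgd [Hgx Hgy]]]]].
    split; [apply cont_mult; auto|].
    exists (fun p => fx p * g p + f p * gx p), (fun p => fy p * g p + f p * gy p).
    split; [intros p Hp; destruct (Hfd p Hp), (Hgd p Hp); split; [apply pdx_mult|apply pdy_mult]; auto|].
    split; apply Ck_plus; apply IHk; auto.
Qed.

Lemma Ck_opp k f : Ck k U f -> Ck k U (fun p => - f p).
Proof. intros H. apply (Ck_funext k (fun p => (fun _ => -1) p * f p)); [intros; simpl; ring|].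
  apply Ck_mult; auto; apply Ck_const. Qed.
Lemma Ck_minus k f g : Ck k U f -> Ck k U g -> Ck k U (fun p => f p - g p).
Proof. intros H1 H2. apply (Ck_funext k (fun p => f p + (fun q => - g q) p)); [intros; simpl; ring|].
  apply Ck_plus; auto; apply Ck_opp; auto. Qed.

Lemma Ck_comp0 (phi phi' : R -> R) (I : R -> Prop)
  (Hd : forall y, I y -> derivable_pt_lim phi y (phi' y)) f :
  (forall p, U p -> I (f p)) -> cont_on U f -> cont_on U (fun p => phi (f p)).
Proof. intros Hr Hf. apply cont_comp; auto. intros p Hp. eapply dcont; apply Hd; auto. Qed.

Lemma Ck_compS (phi phi' : R -> R) (I : R -> Prop)
  (Hd : forall y, I y -> derivable_pt_lim phi y (phi' y)) k f :
  (forall p, U p -> I (f p)) -> Ck (S k) U f -> Ck k U (fun p => phi' (f p)) ->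
  Ck (S k) U (fun p => phi (f p)).
Proof.
  intros Hr Hf Hf'.
  destruct Hf as [Hfc [fx [fy [Hfd [Hfx Hfy]]]]].
  split; [eapply Ck_comp0; eauto|].
  exists (fun p => phi' (f p) * fx p), (fun p => phi' (f p) * fy p).
  split; [intros p Hp; destruct (Hfd p Hp); split; [apply pdx_comp|apply pdy_comp]; auto|].
  split; apply Ck_mult; auto.
Qed.

Lemma Ck_inv k f : (forall p, U p -> f p <> 0) -> Ck k U f -> Ck k U (fun p => / f p).
Proof.
  revert f; induction k; intros f Hr Hf.
  - eapply (Ck_comp0 Rinv (fun y => - (/ y * / y)) (fun y => y <> 0)); eauto. apply dinv.
  - apply (Ck_compS Rinv (fun y => - (/ y * / y)) (fun y => y <> 0)); auto. apply dinv.
    apply Ck_opp. apply Ck_mult; apply IHk; auto; apply Ck_weaken; auto.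
Qed.

Lemma Ck_div k f g : (forall p, U p -> g p <> 0) -> Ck k U f -> Ck k U g -> Ck k U (fun p => f p / g p).
Proof. intros Hr H1 H2. apply (Ck_funext k (fun p => f p * (fun q => / g q) p)); [intros; simpl; unfold Rdiv; ring|].
  apply Ck_mult; auto; apply Ck_inv; auto. Qed.

Lemma Ck_atan k f : Ck k U f -> Ck k U (fun p => atan (f p)).
Proof.
  intros Hf; destruct k.
  - eapply (Ck_comp0 atan (fun y => / (1 + y * y)) (fun _ => True)); eauto. intros; apply datan.
  - apply (Ck_compS atan (fun y => / (1 + y * y)) (fun _ => True)); auto. intros; apply datan.
    apply Ck_inv. intros p _. pose proof (Rle_0_sqr (f p)); unfold Rsqr in *; lra.
    apply Ck_plus; [apply Ck_const|]. apply Ck_mult; apply Ck_weaken; auto.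
Qed.

Lemma Ck_sqrt k f : (forall p, U p -> 0 < f p) -> Ck k U f -> Ck k U (fun p => sqrt (f p)).
Proof.
  revert f; induction k; intros f Hr Hf.
  - eapply (Ck_comp0 sqrt (fun y => / (2 * sqrt y)) (fun y => 0 < y)); eauto. apply dsqrt.
  - apply (Ck_compS sqrt (fun y => / (2 * sqrt y)) (fun y => 0 < y)); auto. apply dsqrt.
    apply Ck_inv. intros p Hp. pose proof (sqrt_lt_R0 _ (Hr p Hp)); lra.
    apply Ck_mult; [apply Ck_const|]. apply IHk; auto; apply Ck_weaken; auto.
Qed.

Lemma Ck_tan k f : (forall p, U p -> - (PI/2) < f p < PI/2) -> Ck k U f -> Ck k U (fun p => tan (f p)).
Proof.
  revert f; induction k; intros f Hr Hf.
  - eapply (Ck_comp0 tan (fun y => 1 + tan y * tan y) (fun y => - (PI/2) < y < PI/2)); eauto. apply dtan.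
  - apply (Ck_compS tan (fun y => 1 + tan y * tan y) (fun y => - (PI/2) < y < PI/2)); auto. apply dtan.
    apply Ck_plus; [apply Ck_const|]. apply Ck_mult; apply IHk; auto; apply Ck_weaken; auto.
Qed.

Definition line_open := forall p, U p -> exists d, d > 0 /\
  (forall t, Rabs (t - fst p) < d -> U (t, snd p)) /\ (forall t, Rabs (t - snd p) < d -> U (fst p, t)).

Lemma Ck_ext_on k f g : line_open -> (forall p, U p -> f p = g p) -> Ck k U f -> Ck k U g.
Proof.
  intros Ho Heq. destruct k as [|k]; intros Hf.
  - intros p Hp eps He. destruct (Hf p Hp eps He) as [d [Hd H]]. exists d; split; auto.
    intros q Hq Hqp. rewrite <- (Heq p Hp), <- (Heq q Hq). auto.
  - destruct Hf as [Hfc [fx [fy [Hfd [Hfx Hfy]]]]].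
    split.
    + intros p Hp eps He. destruct (Hfc p Hp eps He) as [d [Hd H]]. exists d; split; auto.
      intros q Hq Hqp. rewrite <- (Heq p Hp), <- (Heq q Hq). auto.
    + exists fx, fy; split; [|split; auto].
      intros p Hp. destruct (Hfd p Hp) as [Hx Hy]. destruct (Ho p Hp) as [d [Hd [H1 H2]]].
      destruct p as [x y]; simpl in *. split.
      * unfold has_pdx in *; simpl in *.
        apply (derivable_pt_lim_locally_ext (fun t => f (t, y)) _ x (x - d) (x + d)); [lra| |auto].
        intros z Hz. apply Heq. apply H1. apply Rabs_def1; lra.
      * unfold has_pdy in *; simpl in *.
        apply (derivable_pt_lim_locally_ext (fun t => f (x, t)) _ y (y - d) (y + d)); [lra| |auto].
        intros z Hz. apply Heq. apply H2. apply Rabs_def1; lra.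
Qed.

End Fw2.

Lemma pnorm_sq u : pnorm u * pnorm u = fst u * fst u + snd u * snd u.
Proof. unfold pnorm. apply sqrt_sqrt. nra. Qed.

Lemma pnorm_pos u : 0 < fst u * fst u + snd u * snd u -> 0 < pnorm u.
Proof. intros; unfold pnorm; apply sqrt_lt_R0; auto. Qed.

Lemma abs_le_split a b : Rabs a <= b -> -b <= a <= b.
Proof. unfold Rabs; destruct Rcase_abs; lra. Qed.

Lemma parg_facts u : 0 < fst u * fst u + snd u * snd u ->
  0 <= parg u < 2 * PI /\ cos (parg u) = fst u / pnorm u /\ sin (parg u) = snd u / pnorm u.
Proof.
  intros Hu. pose proof (pnorm_pos u Hu) as HN. pose proof (pnorm_sq u) as HN2.
  pose proof (abs_le_split _ _ (abs_fst_le u)) as Hb.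
  set (N := pnorm u) in *. set (x := fst u / N).
  assert (Hx : -1 <= x <= 1).
  { unfold x; split; [apply (Rmult_le_reg_r N); auto; field_simplify; lra|].
    apply (Rmult_le_reg_r N); auto; field_simplify; lra. }
  assert (Hs : sqrt (1 - x²) = Rabs (snd u / N)).
  { rewrite <- sqrt_Rsqr_abs. f_equal. unfold x, Rsqr. field_simplify_eq; [nra|lra]. }
  pose proof (acos_bound x) as Hab. pose proof (cos_acos x Hx) as Hc. pose proof (sin_acos x Hx) as Hsn.
  pose proof PI_RGT_0.
  unfold parg. fold N. fold x. destruct (Rle_dec 0 (snd u)) as [H0|H0].
  - split; [lra|]. split; auto. rewrite Hsn, Hs. apply Rabs_pos_eq. unfold Rdiv; apply Rmult_le_pos; [lra|left; apply Rinv_0_lt_compat; lra].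
  - assert (Hneg : snd u / N < 0) by (apply Rdiv_neg_pos; lra).
    split; [split; [lra|]|].
    { destruct (Req_dec (acos x) 0) as [E|E]; [|lra].
      exfalso. rewrite E, cos_0 in Hc.
      assert (H1 : fst u = x * N) by (unfold x; field; lra). rewrite <- Hc in H1.
      rewrite H1 in HN2. nra. }
    split.
    + rewrite cos_minus, cos_2PI, sin_2PI. rewrite Hc. ring.
    + rewrite sin_minus, cos_2PI, sin_2PI, Hsn, Hs, Rabs_left; auto. ring.
Qed.

Lemma ccw_facts u v : 0 < fst u * fst u + snd u * snd u -> 0 < fst v * fst v + snd v * snd v ->
  0 <= ccw_angle u v < 2 * PI /\
  cos (ccw_angle u v) = (fst u * fst v + snd u * snd v) / (pnorm u * pnorm v) /\
  sin (ccw_angle u v) = (fst u * snd v - snd u * fst v) / (pnorm u * pnorm v).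
Proof.
  intros Hu Hv.
  destruct (parg_facts u Hu) as [Ru [Cu Su]]. destruct (parg_facts v Hv) as [Rv [Cv Sv]].
  pose proof (pnorm_pos u Hu). pose proof (pnorm_pos v Hv).
  assert (Hc : cos (parg v - parg u) = (fst u * fst v + snd u * snd v) / (pnorm u * pnorm v)).
  { rewrite cos_minus, Cu, Cv, Su, Sv. field. lra. }
  assert (Hs : sin (parg v - parg u) = (fst u * snd v - snd u * fst v) / (pnorm u * pnorm v)).
  { rewrite sin_minus, Cu, Cv, Su, Sv. field. lra. }
  unfold ccw_angle. destruct (Rlt_dec (parg v - parg u) 0).
  - split; [lra|]. rewrite cos_plus, sin_plus, cos_2PI, sin_2PI, Hc, Hs. split; ring.
  - split; [lra|]. auto.
Qed.

Lemma angle_eq x y : cos x = cos y -> sin x = sin y -> - (2 * PI) < x - y < 2 * PI -> x = y.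
Proof.
  intros Hc Hs Hr. pose proof PI_RGT_0.
  assert (Hd : cos (x - y) = 1).
  { rewrite cos_minus, Hc, Hs. pose proof (sin2_cos2 y). unfold Rsqr in *. lra. }
  set (h := (x - y) / 2).
  assert (Hh : sin h * sin h = 0).
  { replace (x - y) with (2 * h) in Hd by (unfold h; field). rewrite cos_2a_sin in Hd. lra. }
  assert (sin h = 0) by nra.
  destruct (Rtotal_order h 0) as [Hl|[He|Hg]].
  - pose proof (sin_lt_0_var h ltac:(unfold h in *; lra) Hl). lra.
  - unfold h in He. lra.
  - pose proof (sin_gt_0 h Hg ltac:(unfold h in *; lra)). lra.
Qed.

Lemma circ_pos x y a b : x*x + y*y = 1 -> a*a + b*b < 1 -> 0 < (x-a)*(x-a) + (y-b)*(y-b).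
Proof.
  intros H1 H2. destruct (Rle_or_lt ((x-a)*(x-a) + (y-b)*(y-b)) 0) as [H|H]; [|exact H].
  assert (Ez : (x-a)² + (y-b)² = 0) by (pose proof (Rle_0_sqr (x-a)); pose proof (Rle_0_sqr (y-b)); unfold Rsqr in *; lra).
  destruct (Rplus_sqr_eq_0 _ _ Ez) as [E1 E2]. nra.
Qed.

Lemma theta_lt t : 0 <= t < 2*PI -> cos t < sin t -> t < 5*PI/4.
Proof.
  intros Hr Hcs. pose proof PI_RGT_0.
  assert (Hs : 0 < sin (t - PI/4)).
  { rewrite sin_minus, cos_PI4, sin_PI4.
    assert (0 < sqrt 2) by (apply sqrt_lt_R0; lra).
    replace (sin t * (1 / sqrt 2) - cos t * (1 / sqrt 2)) with ((sin t - cos t) / sqrt 2) by (field; lra).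
    apply Rdiv_lt_0_compat; lra. }
  destruct (Rlt_or_le t (5*PI/4)) as [H0|H0]; auto.
  pose proof (sin_le_0 (t - PI/4) ltac:(lra) ltac:(lra)). lra.
Qed.

Lemma half_sum c s c2 s2 c3 s3 p :
  c*c + s*s = 1 -> c2 = -s -> s2 = c -> c3 = -c -> s3 = -s -> in_disc p ->
  ccw_angle (psub (c,s) p) (psub (c2,s2) p) + ccw_angle (psub (c2,s2) p) (psub (c3,s3) p)
  = PI + atan (2*(c*snd p - s*fst p)/(1 - fst p*fst p - snd p*snd p)).
Proof.
  intros h -> -> -> -> Hd. destruct p as [a b]. unfold in_disc in Hd; simpl in *.
  pose proof PI_RGT_0 as HPI.
  assert (Hu : 0 < fst (psub (c,s) (a,b)) * fst (psub (c,s) (a,b)) + snd (psub (c,s) (a,b)) * snd (psub (c,s) (a,b)))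
    by (simpl; apply circ_pos; auto).
  assert (Hv : 0 < fst (psub (-s,c) (a,b)) * fst (psub (-s,c) (a,b)) + snd (psub (-s,c) (a,b)) * snd (psub (-s,c) (a,b)))
    by (simpl; apply circ_pos; auto; lra).
  assert (Hw : 0 < fst (psub (-c,-s) (a,b)) * fst (psub (-c,-s) (a,b)) + snd (psub (-c,-s) (a,b)) * snd (psub (-c,-s) (a,b)))
    by (simpl; apply circ_pos; auto; lra).
  destruct (ccw_facts _ _ Hu Hv) as [R1 [C1 S1]].
  destruct (ccw_facts _ _ Hv Hw) as [R2 [C2 S2]].
  pose proof (pnorm_pos _ Hu) as Pu. pose proof (pnorm_pos _ Hv) as Pv. pose proof (pnorm_pos _ Hw) as Pw.
  pose proof (pnorm_sq (psub (c,s) (a,b))) as Qu.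
  pose proof (pnorm_sq (psub (-s,c) (a,b))) as Qv.
  pose proof (pnorm_sq (psub (-c,-s) (a,b))) as Qw.
  set (t1 := ccw_angle (psub (c,s) (a,b)) (psub (-s,c) (a,b))) in *.
  set (t2 := ccw_angle (psub (-s,c) (a,b)) (psub (-c,-s) (a,b))) in *.
  set (Nu := pnorm (psub (c,s) (a,b))) in *.
  set (Nv := pnorm (psub (-s,c) (a,b))) in *.
  set (Nw := pnorm (psub (-c,-s) (a,b))) in *.
  simpl in *.
  rewrite <- h.
  set (D := c*c + s*s - a*a - b*b).
  assert (HD : 0 < D) by (unfold D; lra).
  set (w := 2 * (c * b - s * a) / D).
  assert (Hsq : 0 < sqrt (1 + w²)) by (apply sqrt_lt_R0; pose proof (Rle_0_sqr w); lra).
  assert (Hprod : Nu * Nw = D * sqrt (1 + w²)).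
  { assert (E1 : Nu * Nw = sqrt ((Nu*Nu) * (Nw*Nw))).
    { rewrite sqrt_mult by nra. rewrite !sqrt_square by lra. reflexivity. }
    rewrite E1, Qu, Qw.
    replace (D * sqrt (1 + w²)) with (sqrt (D * D) * sqrt (1 + w²)) by (rewrite sqrt_square; lra).
    rewrite <- sqrt_mult by (try nra; pose proof (Rle_0_sqr w); lra).
    f_equal. unfold w, Rsqr, D. field. fold D; lra. }
  assert (T1 : t1 < 5*PI/4).
  { apply theta_lt; auto. rewrite C1, S1. apply Rmult_lt_compat_r.
    apply Rinv_0_lt_compat; nra. nra. }
  assert (T2 : t2 < 5*PI/4).
  { apply theta_lt; auto. rewrite C2, S2. apply Rmult_lt_compat_r.
    apply Rinv_0_lt_compat; nra. nra. }
  pose proof (atan_bound w) as Hat.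
  apply angle_eq; [| | lra].
  - rewrite cos_plus, C1, C2, S1, S2, (Rplus_comm PI), neg_cos, cos_atan.
    match goal with |- ?A / _ * (?B / _) - ?C / _ * (?E0 / _) = _ =>
      replace (A / (Nu*Nv) * (B / (Nv*Nw)) - C / (Nu*Nv) * (E0 / (Nv*Nw)))
      with ((A*B - C*E0)/((Nu*Nw)*(Nv*Nv))) by (field; lra) end.
    rewrite Qv, Hprod. unfold D. field. split; [|split]; try lra.
  - rewrite sin_plus, C1, C2, S1, S2, (Rplus_comm PI), neg_sin, sin_atan.
    match goal with |- ?A / _ * (?B / _) + ?C / _ * (?E0 / _) = _ =>
      replace (A / (Nu*Nv) * (B / (Nv*Nw)) + C / (Nu*Nv) * (E0 / (Nv*Nw)))
      with ((A*B + C*E0)/((Nu*Nw)*(Nv*Nv))) by (field; lra) end.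
    rewrite Qv, Hprod. unfold w, D. field. split; [lra|split; [fold D; fold w; lra|lra]].
Qed.

Definition k := 1 / sqrt 2.
Lemma k_sq : k * k = 1/2.
Proof. unfold k. assert (H := sqrt_sqrt 2 ltac:(lra)). assert (0 < sqrt 2) by (apply sqrt_lt_R0; lra).
  replace (1 / sqrt 2 * (1 / sqrt 2)) with (1 / (sqrt 2 * sqrt 2)) by (field; lra). rewrite H; lra. Qed.
Lemma k_pos : 0 < k.
Proof. unfold k. assert (0 < sqrt 2) by (apply sqrt_lt_R0; lra). apply Rdiv_lt_0_compat; lra. Qed.

Lemma cis1 : cis (- PI / 4) = (k, -k).
Proof. unfold cis, k. replace (- PI / 4) with (- (PI/4)) by field. rewrite cos_neg, sin_neg, cos_PI4, sin_PI4. auto. Qed.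
Lemma cis2 : cis (PI / 4) = (k, k).
Proof. unfold cis, k. rewrite cos_PI4, sin_PI4. auto. Qed.
Lemma cis3 : cis (3 * PI / 4) = (-k, k).
Proof. unfold cis, k. replace (3 * PI / 4) with (- (PI/4) + PI) by field.
  rewrite neg_cos, neg_sin, cos_neg, sin_neg, cos_PI4, sin_PI4. f_equal; ring. Qed.
Lemma cis4 : cis (5 * PI / 4) = (-k, -k).
Proof. unfold cis, k. replace (5 * PI / 4) with (PI/4 + PI) by field.
  rewrite neg_cos, neg_sin, cos_PI4, sin_PI4. auto. Qed.
Lemma cis5 : cis (7 * PI / 4) = (k, -k).
Proof. unfold cis, k. replace (7 * PI / 4) with ((- (PI/4) + PI) + PI) by field.
  rewrite !neg_cos, !neg_sin, cos_neg, sin_neg, cos_PI4, sin_PI4. f_equal; ring. Qed.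

Definition Dd (p : pt) := 1 - fst p * fst p - snd p * snd p.
Definition Fm (p : pt) := 2 * k * (fst p + snd p) / Dd p.
Definition Fn (p : pt) := 2 * k * (fst p - snd p) / Dd p.
Definition F1 (p : pt) := (atan (Fm p) + atan (Fn p)) / PI.
Definition F2 (p : pt) := (atan (Fm p) - atan (Fn p)) / PI.

Lemma zmap_formula p : in_disc p -> zmap p = (F1 p, F2 p).
Proof.
  intros Hd. pose proof k_sq as K. pose proof PI_RGT_0.
  unfold zmap, hE, hN, hW, hS, hm. rewrite cis1, cis2, cis3, cis4, cis5.
  set (tE := ccw_angle (psub (k, - k) p) (psub (k, k) p)).
  set (tN := ccw_angle (psub (k, k) p) (psub (- k, k) p)).
  set (tW := ccw_angle (psub (- k, k) p) (psub (- k, - k) p)).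
  set (tS := ccw_angle (psub (- k, - k) p) (psub (k, - k) p)).
  assert (H1 : tE + tN = PI + atan (Fm p)).
  { unfold tE, tN. rewrite (half_sum k (-k) k k (-k) k p); try lra; auto.
    unfold Fm, Dd. do 3 f_equal. unfold Rdiv; ring. }
  assert (H2 : tW + tS = PI + atan (- Fm p)).
  { unfold tW, tS. rewrite (half_sum (-k) k (-k) (-k) k (-k) p); try lra; auto.
    unfold Fm, Dd. do 3 f_equal. unfold Rdiv; ring. }
  assert (H3 : tS + tE = PI + atan (Fn p)).
  { unfold tE, tS. rewrite (half_sum (-k) (-k) k (-k) k k p); try lra; auto.
    unfold Fn, Dd. do 3 f_equal. unfold Rdiv; ring. }
  assert (H4 : tN + tW = PI + atan (- Fn p)).
  { unfold tN, tW. rewrite (half_sum k k (-k) k (-k) (-k) p); try lra; auto.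
    unfold Fn, Dd. do 3 f_equal. unfold Rdiv; ring. }
  rewrite atan_opp in H2, H4.
  unfold F1, F2. f_equal.
  - apply (Rmult_eq_reg_l PI); [|lra]. field_simplify; [|lra|lra]. lra.
  - apply (Rmult_eq_reg_l PI); [|lra]. field_simplify; [|lra|lra]. lra.
Qed.

Definition Gm (q : pt) := tan (PI * (fst q + snd q) / 2).
Definition Gn (q : pt) := tan (PI * (fst q - snd q) / 2).
Definition GS (q : pt) := sqrt (1 + Gm q * Gm q + Gn q * Gn q).
Definition Ginv (q : pt) : pt := (k * (Gm q + Gn q) / (1 + GS q), k * (Gm q - Gn q) / (1 + GS q)).

Lemma diam_iff q : in_diamond q <-> Rabs (fst q + snd q) < 1 /\ Rabs (fst q - snd q) < 1.
Proof.
  unfold in_diamond. destruct q as [x y]; simpl.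
  unfold Rabs; repeat destruct Rcase_abs; split; intros; try split; lra.
Qed.

Lemma line_aux a b t : a*a + b*b < 1 -> Rabs (t - a) < (1 - a*a - b*b)/4 -> t*t + b*b < 1.
Proof.
  intros H1 H2. apply Rabs_def2 in H2 as [H2 H3].
  set (h := t - a) in *. replace t with (a + h) by (unfold h; ring).
  assert (a*a <= 1) by nra. assert (-1 <= a <= 1) by nra.
  nra.
Qed.

Lemma disc_line_open : line_open in_disc.
Proof.
  intros [a b] Hp. unfold in_disc in *; simpl in *.
  exists ((1 - a*a - b*b)/4). split; [lra|]. split; intros t Ht; simpl.
  - apply (line_aux a b t); auto.
  - replace (a*a + t*t) with (t*t + a*a) by ring. apply (line_aux b a t); [lra|].
    replace (1 - b*b - a*a) with (1 - a*a - b*b) by ring. auto.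
Qed.

Lemma atan_frac x : Rabs (2 * atan x / PI) < 1.
Proof.
  pose proof (atan_bound x). pose proof PI_RGT_0. apply Rabs_def1.
  - apply (Rmult_lt_reg_r PI); [lra|]. unfold Rdiv. rewrite Rmult_assoc, Rinv_l; lra.
  - apply (Rmult_lt_reg_r PI); [lra|]. unfold Rdiv. rewrite Rmult_assoc, Rinv_l; lra.
Qed.

Lemma zmap_in p : in_disc p -> in_diamond (zmap p).
Proof.
  intros Hp. rewrite zmap_formula by auto. apply diam_iff. simpl. pose proof PI_RGT_0.
  unfold F1, F2. split.
  - replace ((atan (Fm p) + atan (Fn p)) / PI + (atan (Fm p) - atan (Fn p)) / PI) with (2 * atan (Fm p) / PI) by (field; lra).
    apply atan_frac.
  - replace ((atan (Fm p) + atan (Fn p)) / PI - (atan (Fm p) - atan (Fn p)) / PI) with (2 * atan (Fn p) / PI) by (field; lra).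
    apply atan_frac.
Qed.

Lemma GS_facts q : 1 <= GS q /\ GS q * GS q = 1 + Gm q * Gm q + Gn q * Gn q.
Proof.
  unfold GS. set (m := Gm q); set (n := Gn q).
  assert (H0 : 0 <= m*m + n*n) by (pose proof (Rle_0_sqr m); pose proof (Rle_0_sqr n); unfold Rsqr in *; lra).
  split.
  - apply (Rle_trans _ (sqrt 1)); [rewrite sqrt_1; lra| apply sqrt_le_1_alt; lra].
  - apply sqrt_sqrt. lra.
Qed.

Lemma Ginv_in q : in_diamond q -> in_disc (Ginv q).
Proof.
  intros _. unfold in_disc, Ginv; simpl. destruct (GS_facts q) as [H1 H2].
  set (S := GS q) in *; set (m := Gm q) in *; set (n := Gn q) in *.
  replace (k * (m + n) / (1 + S) * (k * (m + n) / (1 + S)) + k * (m - n) / (1 + S) * (k * (m - n) / (1 + S)))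
    with ((k*k) * (2 * (m*m + n*n)) / ((1+S)*(1+S))) by (field; lra).
  rewrite k_sq. apply (Rmult_lt_reg_r ((1+S)*(1+S))); [nra|].
  unfold Rdiv. rewrite Rmult_assoc, Rinv_l by nra. nra.
Qed.

Lemma Ginv_zmap p : in_disc p -> Ginv (zmap p) = p.
Proof.
  intros Hp. rewrite zmap_formula by auto. pose proof PI_RGT_0.
  unfold Ginv, GS, Gm, Gn; simpl.
  replace (PI * (F1 p + F2 p) / 2) with (atan (Fm p)) by (unfold F1, F2; field; lra).
  replace (PI * (F1 p - F2 p) / 2) with (atan (Fn p)) by (unfold F1, F2; field; lra).
  rewrite !tan_atan. destruct p as [a b]. unfold in_disc in Hp; simpl in Hp.
  unfold Fm, Fn, Dd; simpl. set (D := 1 - a*a - b*b). assert (HD : 0 < D) by (unfold D; lra).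
  assert (E1 : 1 + 2 * k * (a + b) / D * (2 * k * (a + b) / D) + 2 * k * (a - b) / D * (2 * k * (a - b) / D)
     = ((1 + a*a + b*b)/D)²).
  { replace (2 * k * (a + b) / D * (2 * k * (a + b) / D)) with (4 * (k*k) * ((a+b)*(a+b)) / (D*D)) by (field; lra).
    replace (2 * k * (a - b) / D * (2 * k * (a - b) / D)) with (4 * (k*k) * ((a-b)*(a-b)) / (D*D)) by (field; lra).
    rewrite k_sq. unfold Rsqr, D. field. fold D; lra. }
  rewrite E1, sqrt_Rsqr by (unfold Rdiv; apply Rmult_le_pos; [nra|left; apply Rinv_0_lt_compat; lra]).
  f_equal.
  - replace (k * (2 * k * (a + b) / D + 2 * k * (a - b) / D)) with (4 * (k*k) * a / D) by (field; lra).
    rewrite k_sq. unfold D. field. fold D. nra.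
  - replace (k * (2 * k * (a + b) / D - 2 * k * (a - b) / D)) with (4 * (k*k) * b / D) by (field; lra).
    rewrite k_sq. unfold D. field. fold D. nra.
Qed.

Lemma Ginv_D q : Dd (Ginv q) = 2 / (1 + GS q).
Proof.
  destruct (GS_facts q) as [H1 H2]. unfold Dd, Ginv; simpl.
  set (S := GS q) in *; set (m := Gm q) in *; set (n := Gn q) in *.
  replace (k * (m + n) / (1 + S) * (k * (m + n) / (1 + S))) with ((k*k) * ((m + n)*(m+n)) / ((1+S)*(1+S))) by (field; lra).
  replace (k * (m - n) / (1 + S) * (k * (m - n) / (1 + S))) with ((k*k) * ((m - n)*(m-n)) / ((1+S)*(1+S))) by (field; lra).
  rewrite k_sq.
  replace (1 - 1 / 2 * ((m + n) * (m + n)) / ((1 + S) * (1 + S)) - 1 / 2 * ((m - n) * (m - n)) / ((1 + S) * (1 + S)))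
    with (((1+S)*(1+S) - (m*m + n*n)) / ((1+S)*(1+S))) by (field; lra).
  replace (m*m+n*n) with (S*S - 1) by lra. field. lra.
Qed.

Lemma Fm_Ginv q : Fm (Ginv q) = Gm q.
Proof.
  destruct (GS_facts q) as [H1 H2]. unfold Fm. rewrite Ginv_D. unfold Ginv; simpl.
  set (S := GS q) in *; set (m := Gm q) in *; set (n := Gn q) in *.
  replace (2 * k * (k * (m + n) / (1 + S) + k * (m - n) / (1 + S))) with (4 * (k*k) * m / (1+S)) by (field; lra).
  rewrite k_sq. field. lra.
Qed.
Lemma Fn_Ginv q : Fn (Ginv q) = Gn q.
Proof.
  destruct (GS_facts q) as [H1 H2]. unfold Fn. rewrite Ginv_D. unfold Ginv; simpl.
  set (S := GS q) in *; set (m := Gm q) in *; set (n := Gn q) in *.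
  replace (2 * k * (k * (m + n) / (1 + S) - k * (m - n) / (1 + S))) with (4 * (k*k) * n / (1+S)) by (field; lra).
  rewrite k_sq. field. lra.
Qed.

Lemma arg_range x : Rabs x < 1 -> - (PI/2) < PI * x / 2 < PI/2.
Proof. intros H. apply Rabs_def2 in H. pose proof PI_RGT_0. split; nra. Qed.

Lemma zmap_Ginv q : in_diamond q -> zmap (Ginv q) = q.
Proof.
  intros Hq. rewrite zmap_formula by (apply Ginv_in; auto). pose proof PI_RGT_0.
  apply diam_iff in Hq as [H1 H2].
  unfold F1, F2. rewrite Fm_Ginv, Fn_Ginv. unfold Gm, Gn.
  rewrite !atan_tan by (apply arg_range; auto).
  destruct q as [x y]; simpl. f_equal; field; lra.
Qed.

Ltac ck := repeat (first [apply Ck_const | apply Ck_fst | apply Ck_snd | apply Ck_atan | apply Ck_sqrt | apply Ck_tan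
  | apply Ck_plus | apply Ck_minus | apply Ck_mult | apply Ck_div | apply Ck_opp | apply Ck_inv]).

Lemma smooth_z1 : smooth_on in_disc (fun p => fst (zmap p)).
Proof.
  intro n0. apply (Ck_ext_on in_disc n0 F1); [apply disc_line_open| intros; rewrite zmap_formula; auto|].
  unfold F1, Fm, Fn, Dd. pose proof PI_RGT_0. ck.
  all: intros p Hp; unfold in_disc in Hp; lra.
Qed.
Lemma smooth_z2 : smooth_on in_disc (fun p => snd (zmap p)).
Proof.
  intro n0. apply (Ck_ext_on in_disc n0 F2); [apply disc_line_open| intros; rewrite zmap_formula; auto|].
  unfold F2, Fm, Fn, Dd. pose proof PI_RGT_0. ck.
  all: intros p Hp; unfold in_disc in Hp; lra.
Qed.

Lemma GS_pos q : 0 < 1 + Gm q * Gm q + Gn q * Gn q.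
Proof. pose proof (Rle_0_sqr (Gm q)); pose proof (Rle_0_sqr (Gn q)); unfold Rsqr in *; lra. Qed.

Lemma smooth_G1 : smooth_on in_diamond (fun q => fst (Ginv q)).
Proof.
  intro n0. apply (Ck_funext _ n0 (fun q => k * (Gm q + Gn q) / (1 + GS q))); [reflexivity|].
  unfold GS, Gm, Gn. ck.
  all: intros q Hq; try (apply diam_iff in Hq as [H1 H2]; apply arg_range; auto).
  - pose proof (GS_facts q) as [H _]. unfold GS, Gm, Gn in H. lra.
  - apply (GS_pos q).
Qed.
Lemma smooth_G2 : smooth_on in_diamond (fun q => snd (Ginv q)).
Proof.
  intro n0. apply (Ck_funext _ n0 (fun q => k * (Gm q - Gn q) / (1 + GS q))); [reflexivity|].
  unfold GS, Gm, Gn. ck.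
  all: intros q Hq; try (apply diam_iff in Hq as [H1 H2]; apply arg_range; auto).
  - pose proof (GS_facts q) as [H _]. unfold GS, Gm, Gn in H. lra.
  - apply (GS_pos q).
Qed.

Lemma pdx_minus f g p l1 l2 : has_pdx f p l1 -> has_pdx g p l2 ->
  has_pdx (fun q => f q - g q) p (l1 - l2).
Proof. unfold has_pdx; intros; apply (derivable_pt_lim_minus (fun t => f (t, snd p)) (fun t => g (t, snd p))); auto. Qed.
Lemma pdy_minus f g p l1 l2 : has_pdy f p l1 -> has_pdy g p l2 ->
  has_pdy (fun q => f q - g q) p (l1 - l2).
Proof. unfold has_pdy; intros; apply (derivable_pt_lim_minus (fun t => f (fst p, t)) (fun t => g (fst p, t))); auto. Qed.
Lemma pdx_div f g p l1 l2 : has_pdx f p l1 -> has_pdx g p l2 -> g p <> 0 ->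
  has_pdx (fun q => f q / g q) p ((l1 * g p - l2 * f p) / (g p * g p)).
Proof. destruct p as [x y]; unfold has_pdx; simpl; intros.
  apply (derivable_pt_lim_div (fun t => f (t, y)) (fun t => g (t, y))); auto. Qed.
Lemma pdy_div f g p l1 l2 : has_pdy f p l1 -> has_pdy g p l2 -> g p <> 0 ->
  has_pdy (fun q => f q / g q) p ((l1 * g p - l2 * f p) / (g p * g p)).
Proof. destruct p as [x y]; unfold has_pdy; simpl; intros.
  apply (derivable_pt_lim_div (fun t => f (x, t)) (fun t => g (x, t))); auto. Qed.

Lemma pdx_disc f g p l : in_disc p -> (forall q, in_disc q -> f q = g q) -> has_pdx f p l -> has_pdx g p l.
Proof.
  intros Hp Heq H. destruct (disc_line_open p Hp) as [d [Hd [H1 H2]]].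
  destruct p as [x y]; unfold has_pdx in *; simpl in *.
  apply (derivable_pt_lim_locally_ext (fun t => f (t, y)) _ x (x - d) (x + d)); [lra| |auto].
  intros z Hz. apply Heq. apply H1. apply Rabs_def1; lra.
Qed.
Lemma pdy_disc f g p l : in_disc p -> (forall q, in_disc q -> f q = g q) -> has_pdy f p l -> has_pdy g p l.
Proof.
  intros Hp Heq H. destruct (disc_line_open p Hp) as [d [Hd [H1 H2]]].
  destruct p as [x y]; unfold has_pdy in *; simpl in *.
  apply (derivable_pt_lim_locally_ext (fun t => f (x, t)) _ y (y - d) (y + d)); [lra| |auto].
  intros z Hz. apply Heq. apply H2. apply Rabs_def1; lra.
Qed.

Ltac pdx := repeat (first [apply pdx_const | apply pdx_fst | apply pdx_snd | eapply pdx_minus | eapply pdx_plus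
  | eapply pdx_div | eapply pdx_mult ]).
Ltac pdy := repeat (first [apply pdy_const | apply pdy_fst | apply pdy_snd | eapply pdy_minus | eapply pdy_plus
  | eapply pdy_div | eapply pdy_mult ]).

Section P.
Variables a b : R.
Hypothesis Hp : a*a + b*b < 1.
Let D := 1 - a*a - b*b.
Let MA := 2*k*(D + 2*a*(a+b))/(D*D).
Let MB := 2*k*(D + 2*b*(a+b))/(D*D).
Let NA := 2*k*(D + 2*a*(a-b))/(D*D).
Let NB := 2*k*(- D + 2*b*(a-b))/(D*D).

Lemma pFm_x : has_pdx Fm (a,b) MA.
Proof. unfold Fm, Dd. eapply pdx_eq. pdx. simpl; lra. simpl. unfold MA, D. field. lra. Qed.
Lemma pFm_y : has_pdy Fm (a,b) MB.
Proof. unfold Fm, Dd. eapply pdy_eq. pdy. simpl; lra. simpl. unfold MB, D. field. lra. Qed.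
Lemma pFn_x : has_pdx Fn (a,b) NA.
Proof. unfold Fn, Dd. eapply pdx_eq. pdx. simpl; lra. simpl. unfold NA, D. field. lra. Qed.
Lemma pFn_y : has_pdy Fn (a,b) NB.
Proof. unfold Fn, Dd. eapply pdy_eq. pdy. simpl; lra. simpl. unfold NB, D. field. lra. Qed.
Let X := / (1 + Fm (a,b) * Fm (a,b)).
Let Y := / (1 + Fn (a,b) * Fn (a,b)).
Lemma sq1 z : 1 + z * z <> 0.
Proof. pose proof (Rle_0_sqr z); unfold Rsqr in *; lra. Qed.
Lemma sq1p z : 0 < / (1 + z * z).
Proof. apply Rinv_0_lt_compat. pose proof (Rle_0_sqr z); unfold Rsqr in *; lra. Qed.

Lemma pF1_x : has_pdx F1 (a,b) ((X*MA + Y*NA)/PI).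
Proof. pose proof PI_RGT_0. unfold F1. eapply pdx_eq. eapply pdx_div. eapply pdx_plus.
  eapply pdx_comp; [apply pFm_x | apply datan]. eapply pdx_comp; [apply pFn_x | apply datan].
  apply pdx_const. lra. unfold X, Y. field. repeat split; try lra; apply sq1. Qed.
Lemma pF1_y : has_pdy F1 (a,b) ((X*MB + Y*NB)/PI).
Proof. pose proof PI_RGT_0. unfold F1. eapply pdy_eq. eapply pdy_div. eapply pdy_plus.
  eapply pdy_comp; [apply pFm_y | apply datan]. eapply pdy_comp; [apply pFn_y | apply datan].
  apply pdy_const. lra. unfold X, Y. field. repeat split; try lra; apply sq1. Qed.
Lemma pF2_x : has_pdx F2 (a,b) ((X*MA - Y*NA)/PI).
Proof. pose proof PI_RGT_0. unfold F2. eapply pdx_eq. eapply pdx_div. eapply pdx_minus.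
  eapply pdx_comp; [apply pFm_x | apply datan]. eapply pdx_comp; [apply pFn_x | apply datan].
  apply pdx_const. lra. unfold X, Y. field. repeat split; try lra; apply sq1. Qed.
Lemma pF2_y : has_pdy F2 (a,b) ((X*MB - Y*NB)/PI).
Proof. pose proof PI_RGT_0. unfold F2. eapply pdy_eq. eapply pdy_div. eapply pdy_minus.
  eapply pdy_comp; [apply pFm_y | apply datan]. eapply pdy_comp; [apply pFn_y | apply datan].
  apply pdy_const. lra. unfold X, Y. field. repeat split; try lra; apply sq1. Qed.

Lemma det_pos : (X*MA + Y*NA)/PI * ((X*MB - Y*NB)/PI) - (X*MB + Y*NB)/PI * ((X*MA - Y*NA)/PI) > 0.
Proof.
  pose proof PI_RGT_0. assert (HD : 0 < D) by (unfold D; lra).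
  assert (HX : 0 < X) by apply sq1p. assert (HY : 0 < Y) by apply sq1p.
  replace ((X*MA + Y*NA)/PI * ((X*MB - Y*NB)/PI) - (X*MB + Y*NB)/PI * ((X*MA - Y*NA)/PI))
    with (-2*X*Y*(MA*NB - MB*NA)/(PI*PI)) by (field; lra).
  assert (EE : MA*NB - MB*NA = -8*(k*k)*(1+a*a+b*b)/(D*D*D)). { unfold MA, MB, NA, NB, D. field. lra. }
  rewrite EE.
  rewrite k_sq.
  replace (-2 * X * Y * (-8 * (1/2) * (1 + a*a + b*b) / (D*D*D)) / (PI*PI))
    with ((8 * X * Y * (1 + a*a + b*b)) * / (D*D*D*(PI*PI))) by (field; lra).
  apply Rmult_lt_0_compat.
  - assert (0 <= a*a + b*b) by (pose proof (Rle_0_sqr a); pose proof (Rle_0_sqr b); unfold Rsqr in *; lra).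
    repeat apply Rmult_lt_0_compat; lra.
  - apply Rinv_0_lt_compat. apply Rmult_lt_0_compat; [|apply Rmult_lt_0_compat; lra]. repeat apply Rmult_lt_0_compat; lra.
Qed.
End P.

Theorem mainTheorem9 :
  diffeo_onto in_disc in_diamond zmap /\
  orientation_preserving_on in_disc zmap.
Proof.
  split.
  - split; [exact zmap_in|]. exists Ginv.
    split; [exact Ginv_in|]. split; [exact Ginv_zmap|]. split; [exact zmap_Ginv|].
    split; split.
    + exact smooth_z1.
    + exact smooth_z2.
    + exact smooth_G1.
    + exact smooth_G2.
  - intros [a b] Hp. pose proof Hp as Hp'. unfold in_disc in Hp'; simpl in Hp'.
    eexists; eexists; eexists; eexists. split; [|split; [|split; [|split]]].
    + eapply pdx_disc; [exact Hp| |apply (pF1_x a b Hp')]. intros q Hq; rewrite zmap_formula; auto.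
    + eapply pdy_disc; [exact Hp| |apply (pF1_y a b Hp')]. intros q Hq; rewrite zmap_formula; auto.
    + eapply pdx_disc; [exact Hp| |apply (pF2_x a b Hp')]. intros q Hq; rewrite zmap_formula; auto.
    + eapply pdy_disc; [exact Hp| |apply (pF2_y a b Hp')]. intros q Hq; rewrite zmap_formula; auto.
    + apply det_pos; auto.
Qed.
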